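(* Fix a partition $\Delta=\{x_0<\dots<x_N\}$ of $[-\pi,\pi]$ and a scale vector $\alpha\in(-1,1)^N$. For $n\in\mathbb{N}$ let $\mathfrak{R}^\alpha_{\Delta,B_n}(2\pi)=\mathcal{F}^\alpha_{\Delta,B_n}(\mathfrak{R}(2\pi))$. Then $\bigcup_{n\in\mathbb{N}}\mathfrak{R}^\alpha_{\Delta,B_n}(2\pi)$ is dense in $\mathcal{C}(2\pi)$ (with respect to the sup norm).
   Context: Let $I=[x_0,x_N]=[-\pi,\pi]$, $N\ge2$, $\Delta=\{x_0<x_1<\dots<x_N\}$, $I_i=[x_{i-1},x_i]$, and $L_i(x)=a_ix+b_i$ the affine map of $I$ onto $I_i$ with $L_i(x_0)=x_{i-1}$, $L_i(x_N)=x_i$. For $f,b\in\mathcal{C}(I)$ with $b(x_0)=f(x_0)$, $b(x_N)=f(x_N)$ and $\alpha\in(-1,1)^N$, $f^\alpha_{\Delta,b}$ is the unique $g\in\mathcal{C}(I)$ with $g(x)=f(x)+\alpha_i(g-b)(L_i^{-1}(x))$ for $x\in I_i$, $i=1,\dots,N$. For a bounded linear $L$ with $(Lf)(x_0)=f(x_0)$, $(Lf)(x_N)=f(x_N)$, $\mathcal{F}^\alpha_{\Delta,L}(f)=f^\alpha_{\Delta,Lf}$. $B_n$ is the Bernstein operator on $I$: $B_nf(x)=\sum_{k=0}^n f\big(x_0+\tfrac{k}{n}(x_N-x_0)\big)\binom{n}{k}\frac{(x-x_0)^k(x_N-x)^{n-k}}{(x_N-x_0)^n}$. $\mathcal{C}(2\pi)=\{f\in\mathcal{C}([-\pi,\pi]):f(-\pi)=f(\pi)\}$,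 $\mathfrak{T}_m$ = real trigonometric polynomials of degree $\le m$, $\mathfrak{R}(2\pi)=\bigcup_{m,n}\{p/q:p\in\mathfrak{T}_m,q\in\mathfrak{T}_n,q>0\text{ on }[-\pi,\pi]\}$. *)

(* Defs.v *)
From Stdlib Require Import Reals Lra Lia.
Open Scope R_scope.

Definition inI (x : R) : Prop := - PI <= x <= PI.

Definition contI (f : R -> R) : Prop :=
  forall x, inI x -> forall eps, 0 < eps ->
    exists delta, 0 < delta /\
      forall y, inI y -> Rabs (y - x) < delta -> Rabs (f y - f x) < eps.

Definition C2pi (f : R -> R) : Prop := contI f /\ f (- PI) = f PI.

Definition trig_poly (m : nat) (p : R -> R) : Prop :=
  exists a b : nat -> R,
    forall x, p x = a 0%nat +
      (match m with
       | 0%nat => 0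
       | S m' => sum_f_R0 (fun j => a (S j) * cos (INR (S j) * x)
                                  + b (S j) * sin (INR (S j) * x)) m'
       end).

(* R(2pi): quotients p/q of trig polynomials with q > 0 on I;
   only the values on I matter *)
Definition trig_rational (r : R -> R) : Prop :=
  exists (m n : nat) (p q : R -> R),
    trig_poly m p /\ trig_poly n q /\
    (forall x, inI x -> 0 < q x) /\
    (forall x, inI x -> r x = p x / q x).

Definition partition (N : nat) (xs : nat -> R) : Prop :=
  (2 <= N)%nat /\ xs 0%nat = - PI /\ xs N = PI /\
  (forall i, (i < N)%nat -> xs i < xs (S i)).

Definition scale_vector (N : nat) (alpha : nat -> R) : Prop :=
  forall i, (1 <= i <= N)%nat -> -1 < alpha i < 1.

(* L_i^{-1} : I_i -> I, inverse of the affine map L_i with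
   L_i(x_0) = x_{i-1}, L_i(x_N) = x_i *)
Definition Linv (N : nat) (xs : nat -> R) (i : nat) (y : R) : R :=
  xs 0%nat + (xs N - xs 0%nat) * (y - xs (pred i)) / (xs i - xs (pred i)).

(* g is the alpha-fractal function f^alpha_{Delta,b} (it is unique) *)
Definition is_fractal (N : nat) (xs alpha : nat -> R) (f b g : R -> R) : Prop :=
  contI g /\
  forall i, (1 <= i <= N)%nat ->
    forall y, xs (pred i) <= y <= xs i ->
      g y = f y + alpha i * (g (Linv N xs i y) - b (Linv N xs i y)).

Definition bernstein (n : nat) (f : R -> R) (x : R) : R :=
  sum_f_R0 (fun k =>
      f (- PI + INR k / INR n * (PI - - PI)) * Binomial.C n k
      * (x - - PI) ^ k * (PI - x) ^ (n - k) / (PI - - PI) ^ n) n.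

Definition in_fractal_rational (N : nat) (xs alpha : nat -> R) (n : nat)
  (h : R -> R) : Prop :=
  exists r, trig_rational r /\ is_fractal N xs alpha r (bernstein n r) h.

(* Main.v *)
Require Import Defs.
From Stdlib Require Import Reals Lra Lia FunctionalExtensionality.
Open Scope R_scope.

Definition clamp (x : R) : R := Rmax (- PI) (Rmin x PI).

Lemma clamp_in x : inI (clamp x).
Proof. unfold clamp, inI, Rmax, Rmin. pose proof PI_RGT_0.
  repeat match goal with |- context [Rle_dec ?a ?b] => destruct (Rle_dec a b) | H : context [Rle_dec ?a ?b] |- _ => destruct (Rle_dec a b) end; lra. Qed.

Lemma clamp_id x : inI x -> clamp x = x.
Proof. unfold clamp, inI, Rmax, Rmin; intros.
  repeat match goal with |- context [Rle_dec ?a ?b] => destruct (Rle_dec a b) | H : context [Rle_dec ?a ?b] |- _ => destruct (Rle_dec a b) end; lra. Qed.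

Lemma clamp_lip x y : Rabs (clamp x - clamp y) <= Rabs (x - y).
Proof. unfold clamp, Rmax, Rmin. pose proof PI_RGT_0.
  repeat match goal with |- context [Rle_dec ?a ?b] => destruct (Rle_dec a b) | H : context [Rle_dec ?a ?b] |- _ => destruct (Rle_dec a b) end;
  unfold Rabs; repeat destruct Rcase_abs; lra. Qed.

Lemma contI_clamp f : contI f -> forall x, continuity_pt (fun y => f (clamp y)) x.
Proof.
  intros Hf x. unfold continuity_pt, continue_in, limit1_in, limit_in.
  intros eps Heps. destruct (Hf (clamp x) (clamp_in x) eps Heps) as [d [Hd H]].
  exists d; split; [lra|]. intros y [_ Hy]. simpl in *. unfold R_dist in *.
  apply H. apply clamp_in. pose proof (clamp_lip y x). lra.
Qed.

Lemma cont_contI f : (forall x, continuity_pt f x) -> contI f.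
Proof.
  intros Hf x _ eps Heps. specialize (Hf x eps Heps) as [d [Hd H]].
  exists d; split; [lra|]. intros y _ Hy.
  destruct (Req_dec y x) as [->|Hne]. { rewrite Rminus_diag, Rabs_R0; lra. }
  apply (H y). split; [split; [exact I|auto]|exact Hy].
Qed.

Lemma contI_ext f g : contI f -> (forall x, inI x -> f x = g x) -> contI g.
Proof. intros Hf E x Hx eps He. destruct (Hf x Hx eps He) as [d [Hd H]].
  exists d; split; auto. intros y Hy Hxy. rewrite <- !E by auto. auto. Qed.

Lemma unifI f : contI f -> forall eps, 0 < eps -> exists d, 0 < d /\
  forall x y, inI x -> inI y -> Rabs (x - y) < d -> Rabs (f x - f y) < eps.
Proof.
  intros Hf eps He.
  assert (U := Heine (fun y => f (clamp y)) (fun c => -PI <= c <= PI) (compact_P3 _ _)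
     (fun x _ => contI_clamp f Hf x)).
  destruct (U (mkposreal eps He)) as [[d Hd] H]. exists d; split; auto.
  intros x y Hx Hy Hxy. simpl in *. specialize (H x y Hx Hy Hxy).
  rewrite !clamp_id in H; auto.
Qed.

Lemma boundI f : contI f -> exists M, 0 <= M /\ forall x, inI x -> Rabs (f x) <= M.
Proof.
  intros Hf. pose proof PI_RGT_0.
  destruct (continuity_ab_maj (fun y => f (clamp y)) (-PI) PI ltac:(lra)
     (fun c _ => contI_clamp f Hf c)) as [M1 [H1 _]].
  destruct (continuity_ab_maj (fun y => - f (clamp y)) (-PI) PI ltac:(lra)
     (fun c _ => continuity_pt_opp _ _ (contI_clamp f Hf c))) as [M2 [H2 _]].
  exists (Rabs (f (clamp M1)) + Rabs (f (clamp M2))). split.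
  { pose proof (Rabs_pos (f (clamp M1))); pose proof (Rabs_pos (f (clamp M2))); lra. }
  intros x Hx. specialize (H1 x Hx); specialize (H2 x Hx). rewrite clamp_id in H1, H2 by auto.
  unfold Rabs in *; repeat destruct Rcase_abs; lra.
Qed.

Inductive TP : (R -> R) -> Prop :=
| TP_cos : forall c k, TP (fun x => c * cos (INR k * x))
| TP_sin : forall c k, TP (fun x => c * sin (INR k * x))
| TP_add : forall f g, TP f -> TP g -> TP (fun x => f x + g x)
| TP_ext : forall f g, TP f -> (forall x, f x = g x) -> TP g.

Lemma TP_const c : TP (fun _ => c).
Proof. apply (TP_ext _ _ (TP_cos c 0)). intros; simpl. rewrite Rmult_0_l, cos_0; ring. Qed.

Lemma TP_scal c f : TP f -> TP (fun x => c * f x).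
Proof.
  induction 1.
  - apply (TP_ext _ _ (TP_cos (c*c0) k)); intros; ring.
  - apply (TP_ext _ _ (TP_sin (c*c0) k)); intros; ring.
  - apply (TP_ext _ _ (TP_add _ _ IHTP1 IHTP2)); intros; simpl; ring.
  - apply (TP_ext _ _ IHTP); intros; simpl; rewrite H0; ring.
Qed.

Lemma cc a b : cos a * cos b = (cos (a + b) + cos (a - b)) / 2.
Proof. rewrite cos_plus, cos_minus; field. Qed.
Lemma sc a b : sin a * cos b = (sin (a + b) + sin (a - b)) / 2.
Proof. rewrite sin_plus, sin_minus; field. Qed.
Lemma cs a b : cos a * sin b = (sin (a + b) - sin (a - b)) / 2.
Proof. rewrite sin_plus, sin_minus; field. Qed.
Lemma ss a b : sin a * sin b = (cos (a - b) - cos (a + b)) / 2.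
Proof. rewrite cos_plus, cos_minus; field. Qed.

Lemma INR_shift k x : INR k * x + x = INR (S k) * x.
Proof. rewrite S_INR; ring. Qed.
Lemma INR_shift' k x : INR (S k) * x - x = INR k * x.
Proof. rewrite S_INR; ring. Qed.

Lemma TP_mcos f : TP f -> TP (fun x => f x * cos x).
Proof.
  induction 1.
  - destruct k as [|k].
    + apply (TP_ext _ _ (TP_cos c 1)); intros; simpl. rewrite Rmult_0_l, cos_0, Rmult_1_l; ring.
    + apply (TP_ext _ _ (TP_add _ _ (TP_cos (c/2) (S (S k))) (TP_cos (c/2) k))).
      intros x. rewrite Rmult_assoc, cc, INR_shift, INR_shift'. field.
  - destruct k as [|k].
    + apply (TP_ext _ _ (TP_const 0)); intros; simpl. rewrite Rmult_0_l, sin_0; ring.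
    + apply (TP_ext _ _ (TP_add _ _ (TP_sin (c/2) (S (S k))) (TP_sin (c/2) k))).
      intros x. rewrite Rmult_assoc, sc, INR_shift, INR_shift'. field.
  - apply (TP_ext _ _ (TP_add _ _ IHTP1 IHTP2)); intros; simpl; ring.
  - apply (TP_ext _ _ IHTP); intros; simpl; rewrite H0; ring.
Qed.

Lemma TP_msin f : TP f -> TP (fun x => f x * sin x).
Proof.
  induction 1.
  - destruct k as [|k].
    + apply (TP_ext _ _ (TP_sin c 1)); intros; simpl. rewrite Rmult_0_l, cos_0, Rmult_1_l; ring.
    + apply (TP_ext _ _ (TP_add _ _ (TP_sin (c/2) (S (S k))) (TP_sin (-c/2) k))).
      intros x. rewrite Rmult_assoc, cs, INR_shift, INR_shift'. field.
  - destruct k as [|k].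
    + apply (TP_ext _ _ (TP_const 0)); intros; simpl. rewrite Rmult_0_l, sin_0; ring.
    + apply (TP_ext _ _ (TP_add _ _ (TP_cos (-c/2) (S (S k))) (TP_cos (c/2) k))).
      intros x. rewrite Rmult_assoc, ss, INR_shift, INR_shift'. field.
  - apply (TP_ext _ _ (TP_add _ _ IHTP1 IHTP2)); intros; simpl; ring.
  - apply (TP_ext _ _ IHTP); intros; simpl; rewrite H0; ring.
Qed.

Lemma TP_cont f : TP f -> continuity f.
Proof.
  induction 1.
  - apply continuity_mult. apply continuity_const; intros ? ?; auto.
    apply (continuity_comp (fun x => INR k * x) cos).
    + apply continuity_mult. apply continuity_const; intros ? ?; auto. apply derivable_continuous, derivable_id.
    + apply continuity_cos.
  - apply continuity_mult. apply continuity_const; intros ? ?; auto.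
    apply (continuity_comp (fun x => INR k * x) sin).
    + apply continuity_mult. apply continuity_const; intros ? ?; auto. apply derivable_continuous, derivable_id.
    + apply continuity_sin.
  - apply continuity_plus; auto.
  - replace g with f; auto. apply functional_extensionality; auto.
Qed.

Definition trsum (a b : nat -> R) (m : nat) (x : R) :=
  sum_f_R0 (fun j => a j * cos (INR j * x) + b j * sin (INR j * x)) m.

Definition Rep (f : R -> R) := exists m a b, (forall j, (m < j)%nat -> a j = 0 /\ b j = 0) /\
  forall x, f x = trsum a b m x.

Lemma trsum_pad a b m M x : (forall j, (m < j)%nat -> a j = 0 /\ b j = 0) -> (m <= M)%nat ->
  trsum a b M x = trsum a b m x.
Proof.
  intros Hz HM. induction HM; auto. unfold trsum in *. rewrite tech5, IHHM.
  destruct (Hz (S m0)) as [-> ->]; [lia|]. ring.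
Qed.

Lemma delta_sum (F : nat -> R) k : sum_f_R0 (fun j => if Nat.eqb j k then F j else 0) k = F k.
Proof.
  destruct k as [|k]; simpl; auto.
  rewrite sum_eq_R0. rewrite Nat.eqb_refl; ring.
  intros n Hn. destruct (Nat.eqb_spec n (S k)); [lia|auto].
Qed.

Lemma TP_Rep f : TP f -> Rep f.
Proof.
  induction 1.
  - exists k, (fun j => if Nat.eqb j k then c else 0), (fun _ => 0). split.
    + intros j Hj. destruct (Nat.eqb_spec j k); [lia|auto].
    + intros x. unfold trsum. rewrite <- (delta_sum (fun j => c * cos (INR j * x)) k).
      apply sum_eq. intros i _. destruct (Nat.eqb i k); ring.
  - exists k, (fun _ => 0), (fun j => if Nat.eqb j k then c else 0). split.
    + intros j Hj. destruct (Nat.eqb_spec j k); [lia|auto].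
    + intros x. unfold trsum. rewrite <- (delta_sum (fun j => c * sin (INR j * x)) k).
      apply sum_eq. intros i _. destruct (Nat.eqb i k); ring.
  - destruct IHTP1 as [m1 [a1 [b1 [Z1 E1]]]]. destruct IHTP2 as [m2 [a2 [b2 [Z2 E2]]]].
    exists (max m1 m2), (fun j => a1 j + a2 j), (fun j => b1 j + b2 j). split.
    + intros j Hj. destruct (Z1 j) as [-> ->]; [lia|]. destruct (Z2 j) as [-> ->]; [lia|]. lra.
    + intros x. rewrite E1, E2, <- (trsum_pad a1 b1 m1 (max m1 m2)), <- (trsum_pad a2 b2 m2 (max m1 m2)) by (auto; lia).
      unfold trsum. rewrite <- sum_plus. apply sum_eq. intros; ring.
  - destruct IHTP as [m [a [b [Z E]]]]. exists m, a, b. split; auto. intros; rewrite <- H0; auto.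
Qed.

Lemma Rep_trig f : Rep f -> exists m, trig_poly m f.
Proof.
  intros [m [a [b [Z E]]]]. exists m. unfold trig_poly. exists a, b. intros x. rewrite E. unfold trsum.
  destruct m as [|m].
  - simpl. rewrite Rmult_0_l, cos_0, sin_0. ring.
  - rewrite decomp_sum by lia. simpl pred. simpl INR at 1 2. rewrite Rmult_0_l, cos_0, sin_0.
    replace (a 0%nat * 1 + b 0%nat * 0) with (a 0%nat) by ring. f_equal.
Qed.

Lemma TP_trig f : TP f -> exists m, trig_poly m f.
Proof. intros; apply Rep_trig, TP_Rep; auto. Qed.

Lemma cover (h : R) (m : nat) : 0 < h -> forall y, 0 <= y <= INR m * h ->
  exists j, (j <= m)%nat /\ Rabs (y - INR j * h) <= h.
Proof.
  intros Hh. induction m as [|m IH]; intros y Hy.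
  - exists 0%nat. split; auto. simpl in *. replace y with 0 by lra.
    rewrite Rmult_0_l, Rminus_0_r, Rabs_R0; lra.
  - destruct (Rle_dec y (INR m * h)) as [Hle|Hgt].
    + destruct (IH y) as [j [Hj H]]; [lra|]. exists j; split; [lia|auto].
    + exists (S m); split; auto. rewrite S_INR in *. unfold Rabs; destruct Rcase_abs; lra.
Qed.

Lemma cos_abs d : cos (Rabs d) = cos d.
Proof. unfold Rabs; destruct Rcase_abs; auto; apply cos_neg. Qed.

Lemma cos_far d dl : 0 < dl < PI -> -(2*PI) <= d <= 2*PI -> cos dl < cos d ->
  Rabs d < dl \/ d > 2*PI - dl \/ d < -(2*PI - dl).
Proof.
  intros Hdl Hd Hc. rewrite <- (cos_abs d) in Hc. assert (He : 0 <= Rabs d <= 2*PI) by (unfold Rabs; destruct Rcase_abs; lra).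
  assert (Hd' : (0 <= d /\ Rabs d = d) \/ (d < 0 /\ Rabs d = - d)) by (unfold Rabs; destruct Rcase_abs; [right|left]; split; lra).
  remember (Rabs d) as e eqn:Hee.
  destruct (Rlt_le_dec e dl); [left; auto|].
  destruct (Rle_lt_dec e PI).
  - exfalso. assert (cos e <= cos dl) by (apply cos_decr_1; lra). lra.
  - assert (Hc' : cos (2*PI - e) = cos e) by (rewrite cos_minus, cos_2PI, sin_2PI; ring).
    destruct (Rlt_le_dec (2*PI - e) dl).
    + right. destruct Hd' as [[? ?]|[? ?]]; [left|right]; lra.
    + exfalso. assert (cos (2*PI - e) <= cos dl) by (apply cos_decr_1; lra). lra.
Qed.

Lemma circ_unif f : C2pi f -> forall eps, 0 < eps -> exists dl, 0 < dl < PI /\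
  forall x t, inI x -> inI t -> cos dl < cos (x - t) -> Rabs (f t - f x) < eps.
Proof.
  intros [Hf Hp] eps He. pose proof PI_RGT_0.
  destruct (unifI f Hf (eps/2)) as [d0 [Hd0 U]]; [lra|].
  exists (Rmin d0 (PI/2)). assert (Hm1 := Rmin_l d0 (PI/2)). assert (Hm2 := Rmin_r d0 (PI/2)).
  assert (0 < Rmin d0 (PI/2)) by (apply Rmin_pos; lra).
  split; [lra|]. intros x t Hx Ht Hc. unfold inI in *.
  destruct (cos_far (x - t) (Rmin d0 (PI/2))) as [H1|[H1|H1]]; try lra.
  - rewrite Rabs_minus_sym. apply Rlt_trans with (eps/2); [|lra]. apply U; auto; lra.
  - assert (A1 : Rabs (f x - f PI) < eps/2) by (apply U; unfold inI; try lra; unfold Rabs; destruct Rcase_abs; lra).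
    assert (A2 : Rabs (f t - f (-PI)) < eps/2) by (apply U; unfold inI; try lra; unfold Rabs; destruct Rcase_abs; lra).
    rewrite Hp in A2. unfold Rabs in *; repeat destruct Rcase_abs; lra.
  - assert (A1 : Rabs (f t - f PI) < eps/2) by (apply U; unfold inI; try lra; unfold Rabs; destruct Rcase_abs; lra).
    assert (A2 : Rabs (f x - f (-PI)) < eps/2) by (apply U; unfold inI; try lra; unfold Rabs; destruct Rcase_abs; lra).
    rewrite Hp in A2. unfold Rabs in *; repeat destruct Rcase_abs; lra.
Qed.

Definition Kp (p : nat) (t x : R) := ((1 + cos (x - t)) / 2) ^ p.

Lemma TP_Kp p t : TP (fun x => Kp p t x).
Proof.
  induction p as [|p IH].
  - apply (TP_ext _ _ (TP_const 1)); intros; unfold Kp; simpl; auto.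
  - apply (TP_ext _ _ (TP_add _ _ (TP_scal (1/2) _ IH)
             (TP_add _ _ (TP_scal (cos t / 2) _ (TP_mcos _ IH)) (TP_scal (sin t / 2) _ (TP_msin _ IH))))).
    intros x. unfold Kp. simpl. rewrite cos_minus. field.
Qed.

Lemma Kp_nonneg p t x : 0 <= Kp p t x.
Proof. unfold Kp. apply pow_le. pose proof (COS_bound (x - t)). lra. Qed.

Lemma TP_sum (c : nat -> R) (g : nat -> R -> R) m :
  (forall j, TP (g j)) -> TP (fun x => sum_f_R0 (fun j => c j * g j x) m).
Proof.
  intros H. induction m as [|m IH].
  - simpl. apply TP_scal; auto.
  - apply (TP_ext _ _ (TP_add _ _ IH (TP_scal (c (S m)) _ (H (S m))))). intros; simpl; auto.
Qed.

Lemma term_le_sum (F : nat -> R) m j : (forall i, 0 <= F i) -> (j <= m)%nat -> F j <= sum_f_R0 F m.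
Proof.
  intros H Hj. induction m.
  - replace j with 0%nat by lia. simpl. lra.
  - simpl. destruct (Nat.eq_dec j (S m)) as [->|Hne].
    + assert (0 <= sum_f_R0 F m) by (apply cond_pos_sum; auto). lra.
    + specialize (IHm ltac:(lia)). specialize (H (S m)). lra.
Qed.

Lemma sum_lin (a k : nat -> R) c m : sum_f_R0 (fun j => (a j - c) * k j) m =
  sum_f_R0 (fun j => a j * k j) m - c * sum_f_R0 (fun j => 1 * k j) m.
Proof. induction m; simpl; [ring|rewrite IHm; ring]. Qed.

Lemma trig_approx f : C2pi f -> forall eps, 0 < eps -> exists r, trig_rational r /\
  forall x, inI x -> Rabs (r x - f x) < eps.
Proof.
  intros Hf eps He. pose proof PI_RGT_0 as HPI.
  destruct (boundI f (proj1 Hf)) as [M [HM0 HM]].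
  destruct (circ_unif f Hf (eps/2)) as [dl [Hdl U]]; [lra|].
  destruct (INR_unbounded (2*PI/dl)) as [m Hm].
  assert (Hm0 : 0 < INR m). { apply Rlt_trans with (2*PI/dl); auto. apply Rdiv_lt_0_compat; lra. }
  set (h := 2*PI / INR m).
  assert (Hh : 0 < h < dl).
  { unfold h. split. apply Rdiv_lt_0_compat; lra.
    apply (Rmult_lt_reg_r (INR m)); auto. unfold Rdiv. rewrite Rmult_assoc, Rinv_l by lra.
    apply (Rmult_lt_reg_r (/dl)). apply Rinv_0_lt_compat; lra.
    replace (dl * INR m * / dl) with (INR m) by (field; lra). lra. }
  set (A := (1 + cos h)/2). set (B := (1 + cos dl)/2).
  assert (HB : 0 < B). { unfold B. assert (cos PI < cos dl) by (apply cos_decreasing_1; lra).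
    rewrite cos_PI in *. lra. }
  assert (HBA : B < A). { unfold A, B. assert (cos dl < cos h) by (apply cos_decreasing_1; lra). lra. }
  assert (HA1 : A <= 1) by (unfold A; pose proof (COS_bound h); lra).
  destruct (pow_lt_1_zero (B/A)) with (y := eps / (4 * (M+1) * (INR m + 1))) as [p Hp].
  { rewrite Rabs_pos_eq. apply (Rmult_lt_reg_r A). lra. unfold Rdiv. rewrite Rmult_assoc, Rinv_l; lra.
    apply Rlt_le, Rdiv_lt_0_compat; lra. }
  { apply Rdiv_lt_0_compat; [lra|]. apply Rmult_lt_0_compat; lra. }
  specialize (Hp p (le_n p)). rewrite Rabs_pos_eq in Hp by (apply pow_le, Rlt_le, Rdiv_lt_0_compat; lra).
  set (t := fun j : nat => - PI + INR j * h).
  set (P := fun x => sum_f_R0 (fun j => f (t j) * Kp p (t j) x) m).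
  set (Q := fun x => sum_f_R0 (fun j => 1 * Kp p (t j) x) m).
  assert (HQ : forall x, inI x -> A ^ p <= Q x).
  { intros x Hx. destruct (cover h m (proj1 Hh) (x + PI)) as [j [Hj Hd]].
    { assert (INR m * h = 2*PI) by (unfold h; field; lra). unfold inI in *; lra. }
    apply Rle_trans with (1 * Kp p (t j) x).
    - rewrite Rmult_1_l. unfold Kp, A. apply pow_incr. split. pose proof (COS_bound h); lra.
      assert (cos h <= cos (x - t j)); [|lra]. rewrite <- (cos_abs (x - t j)). apply cos_decr_1; try lra.
      apply Rabs_pos. unfold t. replace (x - (- PI + INR j * h)) with (x + PI - INR j * h) by ring. lra.
      unfold t. replace (x - (- PI + INR j * h)) with (x + PI - INR j * h) by ring. lra.
    - unfold Q. apply (term_le_sum (fun j => 1 * Kp p (t j) x)); auto.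
      intros; rewrite Rmult_1_l; apply Kp_nonneg. }
  assert (HAp : 0 < A ^ p) by (apply pow_lt; lra).
  exists (fun x => P x / Q x). split.
  - destruct (TP_trig P) as [m1 H1]. { apply TP_sum. intros; apply TP_Kp. }
    destruct (TP_trig Q) as [m2 H2]. { apply TP_sum. intros; apply TP_Kp. }
    exists m1, m2, P, Q. repeat split; auto. intros x Hx. specialize (HQ x Hx). lra.
  - intros x Hx. specialize (HQ x Hx).
    replace (P x / Q x - f x) with (sum_f_R0 (fun j => (f (t j) - f x) * Kp p (t j) x) m / Q x).
    2:{ rewrite sum_lin. fold (P x) (Q x). field. lra. }
    assert (Hterm : forall j, (j <= m)%nat ->
      Rabs ((f (t j) - f x) * Kp p (t j) x) <= eps/2 * (1 * Kp p (t j) x) + 2*M * B^p).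
    { intros j Hj. rewrite Rabs_mult, (Rabs_pos_eq (Kp _ _ _)) by apply Kp_nonneg.
      assert (Htj : inI (t j)).
      { unfold inI, t, h. split. assert (0 <= INR j * (2*PI/INR m)) by (apply Rmult_le_pos; [apply pos_INR|apply Rlt_le, Rdiv_lt_0_compat; lra]); lra.
        assert (INR j * (2*PI/INR m) <= 2*PI); [|lra].
        apply le_INR in Hj. replace (INR j * (2*PI/INR m)) with (2*PI * (INR j / INR m)) by (field; lra).
        rewrite <- (Rmult_1_r (2*PI)) at 2. apply Rmult_le_compat_l; [lra|].
        apply (Rmult_le_reg_r (INR m)); auto. unfold Rdiv. rewrite Rmult_assoc, Rinv_l; lra. }
      assert (HK := Kp_nonneg p (t j) x). assert (HBp : 0 <= B^p) by (apply pow_le; lra).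
      destruct (Rlt_dec (cos dl) (cos (x - t j))) as [Hc|Hc].
      - specialize (U x (t j) Hx Htj Hc). assert (0 <= 2 * M * B^p) by (apply Rmult_le_pos; lra).
        rewrite Rmult_1_l. assert (Rabs (f (t j) - f x) * Kp p (t j) x <= eps/2 * Kp p (t j) x) by (apply Rmult_le_compat_r; lra). lra.
      - assert (Kp p (t j) x <= B^p) by (unfold Kp, B; apply pow_incr; pose proof (COS_bound (x - t j)); lra).
        assert (Rabs (f (t j) - f x) <= 2*M).
        { pose proof (HM _ Htj); pose proof (HM x Hx). unfold Rabs in *; repeat destruct Rcase_abs; lra. }
        assert (0 <= eps/2 * (1 * Kp p (t j) x)) by (apply Rmult_le_pos; lra).
        assert (Rabs (f (t j) - f x) * Kp p (t j) x <= 2*M * B^p); [|lra].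
        apply Rmult_le_compat; auto using Rabs_pos. }
    unfold Rdiv. rewrite Rabs_mult, Rabs_inv, (Rabs_pos_eq (Q x)) by lra.
    apply (Rmult_lt_reg_r (Q x)); [lra|]. rewrite Rmult_assoc, Rinv_l, Rmult_1_r by lra.
    eapply Rle_lt_trans. apply sum_f_R0_triangle.
    eapply Rle_lt_trans. apply sum_Rle. exact Hterm.
    assert (Hs : sum_f_R0 (fun _ => 2 * M * B ^ p) m = INR (S m) * (2 * M * B^p)).
    { clear. induction m. simpl; ring. rewrite tech5, IHm, (S_INR (S m)). ring. }
    rewrite sum_plus, Hs, S_INR.
    replace (sum_f_R0 (fun l => eps/2 * (1 * Kp p (t l) x)) m) with (eps/2 * Q x)
      by (unfold Q; rewrite scal_sum; apply sum_eq; intros; ring).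
    assert (Hq : (B/A)^p = B^p / A^p) by (unfold Rdiv; rewrite Rpow_mult_distr, pow_inv; auto).
    rewrite Hq in Hp.
    assert (Hbp : B^p < eps / (4 * (M+1) * (INR m + 1)) * A^p).
    { apply (Rmult_lt_reg_r (/ A^p)). apply Rinv_0_lt_compat; auto.
      rewrite Rmult_assoc, Rinv_r, Rmult_1_r; lra. }
    assert (Hk : (INR m + 1) * (2 * M * B ^ p) < eps / 2 * A^p).
    { apply Rle_lt_trans with ((INR m + 1) * (2*(M+1)) * B^p).
      - assert (0 <= B^p) by (apply pow_le; lra). pose proof (pos_INR m).
        replace ((INR m + 1) * (2 * M * B ^ p)) with ((INR m + 1) * (2*M) * B^p) by ring.
        apply Rmult_le_compat_r; auto. apply Rmult_le_compat_l; lra.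
      - apply Rlt_le_trans with ((INR m + 1) * (2 * (M + 1)) * (eps / (4 * (M + 1) * (INR m + 1)) * A ^ p)).
        apply Rmult_lt_compat_l; auto. pose proof (pos_INR m). apply Rmult_lt_0_compat; lra.
        right. pose proof (pos_INR m). field. lra. }
    assert (eps / 2 * A^p <= eps/2 * Q x) by (apply Rmult_le_compat_l; lra).
    lra.
Qed.

Definition bb (n k : nat) (t : R) := Binomial.C n k * t ^ k * (1 - t) ^ (n - k).

Lemma C_shift n i : INR (S i) * Binomial.C (S n) (S i) = INR (S n) * Binomial.C n i.
Proof.
  unfold Binomial.C. replace (S n - S i)%nat with (n - i)%nat by reflexivity.
  rewrite !fact_simpl, !mult_INR.
  pose proof (INR_fact_neq_0 i). pose proof (INR_fact_neq_0 (n - i)).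
  pose proof (INR_fact_neq_0 n). assert (INR (S i) <> 0) by (apply not_0_INR; lia).
  field. auto.
Qed.

Lemma shift_sum (F : nat -> R) n :
  sum_f_R0 (fun k => INR k * Binomial.C (S n) k * F k) (S n) =
  INR (S n) * sum_f_R0 (fun k => Binomial.C n k * F (S k)) n.
Proof.
  rewrite decomp_sum by lia. simpl pred. rewrite scal_sum.
  replace (INR 0 * Binomial.C (S n) 0 * F 0%nat) with 0 by (simpl; ring). rewrite Rplus_0_l.
  apply sum_eq. intros i _. rewrite C_shift. ring.
Qed.

Lemma M0 n t : sum_f_R0 (fun k => bb n k t) n = 1.
Proof. unfold bb. rewrite <- binomial. replace (t + (1 - t)) with 1 by ring. apply pow1. Qed.

Lemma M1 n t : sum_f_R0 (fun k => INR k * bb n k t) n = INR n * t.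
Proof.
  destruct n as [|n]. { simpl. unfold bb. simpl. ring. }
  unfold bb. transitivity (sum_f_R0 (fun k => INR k * Binomial.C (S n) k * (t ^ k * (1-t)^(S n - k))) (S n)).
  { apply sum_eq; intros; ring. }
  rewrite shift_sum. replace (INR (S n) * t) with (INR (S n) * (t * sum_f_R0 (fun k => bb n k t) n)) by (rewrite M0; ring).
  f_equal. rewrite scal_sum.
  apply sum_eq. intros i _. unfold bb. replace (S n - S i)%nat with (n - i)%nat by reflexivity. simpl. ring.
Qed.

Lemma M2 n t : sum_f_R0 (fun k => INR k * INR k * bb (S n) k t) (S n) = INR (S n) * t * (INR n * t + 1).
Proof.
  unfold bb. transitivity (sum_f_R0 (fun k => INR k * Binomial.C (S n) k * (INR k * t ^ k * (1-t)^(S n - k))) (S n)).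
  { apply sum_eq; intros; ring. }
  rewrite shift_sum. replace (INR (S n) * t * (INR n * t + 1)) with
    (INR (S n) * (t * sum_f_R0 (fun k => INR k * bb n k t + bb n k t) n)) by (rewrite sum_plus, M0, M1; ring).
  f_equal. rewrite scal_sum.
  apply sum_eq. intros i _. unfold bb. replace (S n - S i)%nat with (n - i)%nat by reflexivity.
  rewrite S_INR. simpl. ring.
Qed.

Lemma sum_lin3 (F G H : nat -> R) a b c m :
  sum_f_R0 (fun k => a * F k + b * G k + c * H k) m =
  a * sum_f_R0 F m + b * sum_f_R0 G m + c * sum_f_R0 H m.
Proof. induction m; simpl; [ring|rewrite IHm; ring]. Qed.

Lemma Mvar n t : sum_f_R0 (fun k => (INR k / INR (S n) - t) ^ 2 * bb (S n) k t) (S n)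
   = t * (1 - t) / INR (S n).
Proof.
  assert (Hn : INR (S n) <> 0) by (apply not_0_INR; lia).
  transitivity (sum_f_R0 (fun k => (/ INR (S n) ^ 2) * (INR k * INR k * bb (S n) k t)
       + (- 2 * t / INR (S n)) * (INR k * bb (S n) k t) + (t^2) * bb (S n) k t) (S n)).
  { apply sum_eq; intros. field. auto. }
  rewrite sum_lin3, M2, M1, M0. rewrite S_INR in *. field. auto.
Qed.

Lemma bb_nonneg n k t : 0 <= t <= 1 -> 0 <= bb n k t.
Proof.
  intros Ht. unfold bb. apply Rmult_le_pos; [apply Rmult_le_pos|]; try (apply pow_le; lra).
  unfold Binomial.C. apply Rmult_le_pos. apply pos_INR. apply Rlt_le, Rinv_0_lt_compat.
  apply Rmult_lt_0_compat; apply INR_fact_lt_0.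
Qed.

Definition node (n k : nat) := - PI + INR k / INR n * (PI - - PI).

Lemma bern_eq n g x : (n > 0)%nat -> bernstein n g x =
  sum_f_R0 (fun k => g (node n k) * bb n k ((x - - PI) / (PI - - PI))) n.
Proof.
  intros Hn. pose proof PI_RGT_0. unfold bernstein. apply sum_eq. intros k Hk. unfold bb, node.
  set (L := PI - - PI). assert (L <> 0) by (unfold L; lra).
  replace (1 - (x - - PI) / L) with ((PI - x) / L) by (unfold L; field; lra).
  unfold Rdiv. rewrite !Rpow_mult_distr, <- !pow_inv.
  replace ((/ L) ^ n) with ((/L)^k * (/L)^(n-k)) by (rewrite <- pow_add; f_equal; lia).
  ring.
Qed.

Lemma node_in n k : (n > 0)%nat -> (k <= n)%nat -> inI (node n k).
Proof.
  intros Hn Hk. pose proof PI_RGT_0. unfold inI, node.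
  assert (0 <= INR k / INR n <= 1).
  { assert (0 < INR n) by (apply lt_0_INR; lia). apply le_INR in Hk. split.
    apply Rmult_le_pos; [apply pos_INR|apply Rlt_le, Rinv_0_lt_compat; auto].
    apply (Rmult_le_reg_r (INR n)); auto. unfold Rdiv. rewrite Rmult_assoc, Rinv_l; lra. }
  split; nra.
Qed.

Lemma sum_scal_l (F : nat -> R) c m : sum_f_R0 (fun k => c * F k) m = c * sum_f_R0 F m.
Proof. induction m; simpl; [ring|rewrite IHm; ring]. Qed.

Lemma bern_conv g : contI g -> forall eps, 0 < eps -> exists n, (1 <= n)%nat /\
  forall x, inI x -> Rabs (bernstein n g x - g x) < eps.
Proof.
  intros Hg eps He. pose proof PI_RGT_0.
  destruct (boundI g Hg) as [M [HM0 HM]].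
  destruct (unifI g Hg (eps/2)) as [d [Hd U]]; [lra|].
  destruct (INR_unbounded (4 * M * PI^2 / (d^2 * eps))) as [n0 Hn0].
  exists (S n0). split; [lia|]. intros x Hx.
  set (t := (x - - PI) / (PI - - PI)).
  assert (Ht : 0 <= t <= 1) by (unfold t, inI in *; split; [apply Rmult_le_pos; [lra|apply Rlt_le, Rinv_0_lt_compat; lra] |
     apply (Rmult_le_reg_r (PI - - PI)); [lra|]; unfold Rdiv; rewrite Rmult_assoc, Rinv_l; lra]).
  rewrite bern_eq by lia.
  assert (Hsub : sum_f_R0 (fun k => g (node (S n0) k) * bb (S n0) k t) (S n0) - g x =
     sum_f_R0 (fun k => (g (node (S n0) k) - g x) * bb (S n0) k t) (S n0)).
  { rewrite <- (Rmult_1_r (g x)) at 1. rewrite <- (M0 (S n0) t), scal_sum, <- minus_sum.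
    apply sum_eq; intros; ring. }
  fold t. rewrite Hsub. clear Hsub.
  assert (Hpt : forall k, (k <= S n0)%nat -> Rabs ((g (node (S n0) k) - g x) * bb (S n0) k t) <=
     eps/2 * bb (S n0) k t + (2 * M / d^2 * (PI - - PI)^2) * ((INR k / INR (S n0) - t)^2 * bb (S n0) k t)).
  { intros k Hk. rewrite Rabs_mult, (Rabs_pos_eq (bb _ _ _)) by (apply bb_nonneg; auto).
    assert (Hb := bb_nonneg (S n0) k t Ht).
    assert (Hnd : node (S n0) k - x = (PI - - PI) * (INR k / INR (S n0) - t)).
    { unfold node, t. field. repeat split; try lra; apply not_0_INR; lia. }
    assert (Hy := node_in (S n0) k ltac:(lia) Hk).
    assert (Hq : Rabs (g (node (S n0) k) - g x) <= eps/2 + 2*M/d^2 * (node (S n0) k - x)^2).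
    { destruct (Rlt_le_dec (Rabs (node (S n0) k - x)) d) as [Hl|Hl].
      - specialize (U _ _ Hy Hx Hl). assert (0 <= 2*M/d^2 * (node (S n0) k - x)^2); [|lra].
        apply Rmult_le_pos; [|apply pow2_ge_0]. apply Rmult_le_pos; [lra|]. apply Rlt_le, Rinv_0_lt_compat, pow_lt; lra.
      - assert (d^2 <= (node (S n0) k - x)^2).
        { assert (Rabs (node (S n0) k - x) * Rabs (node (S n0) k - x) = (node (S n0) k - x) * (node (S n0) k - x)) by (unfold Rabs; destruct Rcase_abs; ring). simpl. nra. }
        assert (2*M <= 2*M/d^2 * (node (S n0) k - x)^2).
        { apply (Rmult_le_reg_r (d^2)). apply pow_lt; lra.
          replace (2 * M / d ^ 2 * (node (S n0) k - x) ^ 2 * d ^ 2) with (2*M * (node (S n0) k - x) ^ 2) by (field; lra).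
          apply Rmult_le_compat_l; lra. }
        pose proof (HM _ Hy); pose proof (HM x Hx).
        assert (Rabs (g (node (S n0) k) - g x) <= 2*M) by (unfold Rabs in *; repeat destruct Rcase_abs; lra). lra. }
    rewrite Hnd in Hq. replace (eps / 2 * bb (S n0) k t + 2 * M / d ^ 2 * (PI - - PI) ^ 2 * ((INR k / INR (S n0) - t) ^ 2 * bb (S n0) k t))
      with ((eps/2 + 2 * M / d ^ 2 * ((PI - - PI) * (INR k / INR (S n0) - t)) ^ 2) * bb (S n0) k t) by ring.
    apply Rmult_le_compat_r; auto. }
  eapply Rle_lt_trans. apply sum_f_R0_triangle.
  eapply Rle_lt_trans. apply sum_Rle. exact Hpt.
  rewrite sum_plus, !sum_scal_l, M0, Mvar.
  assert (Htt : t * (1 - t) <= 1/4) by (pose proof (pow2_ge_0 (t - 1/2)); nra).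
  assert (Hn : INR n0 < INR (S n0)) by (rewrite S_INR; lra).
  assert (0 < INR n0). { apply Rle_lt_trans with (4 * M * PI ^ 2 / (d ^ 2 * eps)); auto.
    apply Rmult_le_pos. nra. apply Rlt_le, Rinv_0_lt_compat. apply Rmult_lt_0_compat; [apply pow_lt|]; lra. }
  assert (Hd2 : 0 < d^2) by (apply pow_lt; lra).
  assert (Hkey : 2 * M / d ^ 2 * (PI - - PI) ^ 2 * (t * (1 - t) / INR (S n0)) <= M * PI^2 * 2 / (d^2 * INR (S n0))).
  { replace (2 * M / d ^ 2 * (PI - - PI) ^ 2 * (t * (1 - t) / INR (S n0))) with
       ((8 * M * PI^2 / (d^2 * INR (S n0))) * (t * (1-t))) by (field; lra).
    replace (M * PI^2 * 2 / (d^2 * INR (S n0))) with ((8 * M * PI^2 / (d^2 * INR (S n0))) * (1/4)) by (field; lra).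
    apply Rmult_le_compat_l; auto. apply Rmult_le_pos. nra. apply Rlt_le, Rinv_0_lt_compat. apply Rmult_lt_0_compat; lra. }
  assert (M * PI^2 * 2 / (d^2 * INR (S n0)) < eps / 2); [|lra].
  apply (Rmult_lt_reg_r (d^2 * INR (S n0) * 2 / eps)). apply Rmult_lt_0_compat; [|apply Rinv_0_lt_compat; lra]. nra.
  replace (M * PI ^ 2 * 2 / (d ^ 2 * INR (S n0)) * (d ^ 2 * INR (S n0) * 2 / eps)) with (4 * M * PI^2 / eps) by (field; lra).
  replace (eps / 2 * (d ^ 2 * INR (S n0) * 2 / eps)) with (d^2 * INR (S n0)) by (field; lra).
  apply (Rmult_lt_reg_r (/ d^2)). apply Rinv_0_lt_compat; auto.
  replace (4 * M * PI ^ 2 / eps * / d ^ 2) with (4 * M * PI ^ 2 / (d ^ 2 * eps)) by (field; lra).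
  replace (d ^ 2 * INR (S n0) * / d ^ 2) with (INR (S n0)) by (field; lra). lra.
Qed.

Lemma part_mono N xs : partition N xs -> forall i j, (i <= j <= N)%nat -> xs i <= xs j.
Proof.
  intros [_ [_ [_ H]]] i j [Hij HjN]. induction Hij; [lra|].
  specialize (IHHij ltac:(lia)). specialize (H m ltac:(lia)). lra.
Qed.

Lemma part_smono N xs : partition N xs -> forall i j, (i < j <= N)%nat -> xs i < xs j.
Proof.
  intros Hp i j [Hij HjN]. pose proof (part_mono N xs Hp (S i) j ltac:(lia)).
  destruct Hp as [_ [_ [_ Hs]]]. specialize (Hs i ltac:(lia)). lra.
Qed.

Definition piece (xs : nat -> R) i y := xs (pred i) <= y <= xs i.

Lemma piece_inI N xs i y : partition N xs -> (1 <= i <= N)%nat -> piece xs i y -> inI y.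
Proof.
  intros Hp Hi Hy. pose proof (part_mono N xs Hp 0 (pred i) ltac:(lia)).
  pose proof (part_mono N xs Hp i N ltac:(lia)). destruct Hp as [_ [Hx0 [HxN _]]].
  unfold inI, piece in *. rewrite Hx0 in *; rewrite HxN in *. lra.
Qed.

Lemma Linv_in N xs i y : partition N xs -> (1 <= i <= N)%nat -> piece xs i y -> inI (Linv N xs i y).
Proof.
  intros Hp Hi Hy. pose proof (part_smono N xs Hp (pred i) i ltac:(lia)).
  destruct Hp as [_ [Hx0 [HxN _]]]. unfold Linv, inI, piece in *. rewrite Hx0, HxN in *.
  pose proof PI_RGT_0.
  assert (0 <= (y - xs (pred i)) / (xs i - xs (pred i)) <= 1).
  { split. apply Rmult_le_pos; [lra|apply Rlt_le, Rinv_0_lt_compat; lra].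
    apply (Rmult_le_reg_r (xs i - xs (pred i))); [lra|]. unfold Rdiv. rewrite Rmult_assoc, Rinv_l; lra. }
  replace (- PI + (PI - - PI) * (y - xs (pred i)) / (xs i - xs (pred i))) with
    (- PI + (2*PI) * ((y - xs (pred i)) / (xs i - xs (pred i)))) by (field; lra).
  nra.
Qed.

Lemma Linv_left N xs i : partition N xs -> (1 <= i <= N)%nat -> Linv N xs i (xs (pred i)) = xs 0%nat.
Proof.
  intros Hp Hi. pose proof (part_smono N xs Hp (pred i) i ltac:(lia)).
  unfold Linv. field. lra.
Qed.

Lemma Linv_right N xs i : partition N xs -> (1 <= i <= N)%nat -> Linv N xs i (xs i) = xs N.
Proof.
  intros Hp Hi. pose proof (part_smono N xs Hp (pred i) i ltac:(lia)).
  unfold Linv. field. lra.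
Qed.

Fixpoint search (xs : nat -> R) (y : R) (i fuel : nat) : nat :=
  match fuel with
  | O => i
  | S f => if Rle_dec y (xs i) then i else search xs y (S i) f
  end.

Definition idx N xs y := search xs y 1 (N - 1).

Lemma search_spec N xs y : forall fuel i, (1 <= i)%nat -> (i + fuel = N)%nat -> y <= xs N ->
  (forall j, (1 <= j < i)%nat -> xs j < y) ->
  let k := search xs y i fuel in (i <= k <= N)%nat /\ y <= xs k /\ (forall j, (1 <= j < k)%nat -> xs j < y).
Proof.
  induction fuel as [|f IH]; intros i Hi Hf HyN Hm; simpl.
  - rewrite Nat.add_0_r in Hf. subst N. split; [lia|]. split; auto.
  - destruct (Rle_dec y (xs i)) as [Hle|Hgt].
    + split; [lia|auto].
    + destruct (IH (S i)) as [A1 [A2 A3]]; try lia; auto.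
      { intros j Hj. destruct (Nat.eq_dec j i) as [->|]; [lra|apply Hm; lia]. }
      split; [lia|auto].
Qed.

Lemma idx_spec N xs y : partition N xs -> inI y ->
  let k := idx N xs y in (1 <= k <= N)%nat /\ piece xs k y /\ (forall j, (1 <= j < k)%nat -> xs j < y).
Proof.
  intros Hp Hy. pose proof Hp as [HN2 [H0 [HN _]]].
  assert (HyN : y <= xs N) by (unfold inI in Hy; rewrite HN; lra).
  destruct (search_spec N xs y (N - 1) 1 ltac:(lia) ltac:(lia) HyN ltac:(intros; lia)) as [A1 [A2 A3]].
  fold (idx N xs y) in *. split; [lia|]. split; auto. split; auto.
  destruct (Nat.eq_dec (idx N xs y) 1) as [->|Hne].
  - simpl. rewrite H0. unfold inI in Hy. lra.
  - apply Rlt_le, A3. lia.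
Qed.

Lemma alpha_bound N alpha : scale_vector N alpha -> exists a, 0 <= a < 1 /\
  forall i, (1 <= i <= N)%nat -> Rabs (alpha i) <= a.
Proof.
  induction N as [|N IH]; intros Hs.
  - exists 0. split; [lra|]. intros; lia.
  - destruct IH as [a [Ha H]]. { intros i Hi. apply Hs. lia. }
    exists (Rmax a (Rabs (alpha (S N)))). split.
    + split. apply Rle_trans with a; [lra|apply Rmax_l].
      apply Rmax_lub_lt; [lra|]. specialize (Hs (S N) ltac:(lia)). unfold Rabs; destruct Rcase_abs; lra.
    + intros i Hi. destruct (Nat.eq_dec i (S N)) as [->|]. apply Rmax_r.
      apply Rle_trans with a; [apply H; lia|apply Rmax_l].
Qed.

Lemma Rabs_lt_both x y d : Rabs (x - y) < d <-> y - d < x < y + d.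
Proof. unfold Rabs; destruct Rcase_abs; split; intros; lra. Qed.

Lemma PW N xs F : partition N xs ->
  (forall i, (1 <= i <= N)%nat -> forall y, piece xs i y -> forall eps, 0 < eps ->
     exists d, 0 < d /\ forall z, piece xs i z -> Rabs (z - y) < d -> Rabs (F z - F y) < eps) ->
  contI F.
Proof.
  intros Hp Hpw y Hy eps He.
  pose proof Hp as [HN2 [Hx0 [HxN _]]].
  destruct (idx_spec N xs y Hp Hy) as [Hk [[Hl Hr] Hmin]]. set (k := idx N xs y) in *.
  assert (HL : exists dL, 0 < dL /\ forall z, inI z -> y - dL < z <= y -> Rabs (F z - F y) < eps).
  { destruct (Rle_lt_or_eq_dec _ _ Hl) as [Hlt|Heq].
    - destruct (Hpw k Hk y (conj Hl Hr) eps He) as [d [Hd Hc]].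
      exists (Rmin d (y - xs (pred k))). split. apply Rmin_pos; lra.
      intros z Hz [Hz1 Hz2]. pose proof (Rmin_l d (y - xs (pred k))). pose proof (Rmin_r d (y - xs (pred k))).
      apply Hc. unfold piece; lra. apply Rabs_lt_both; lra.
    - destruct (Nat.eq_dec k 1) as [Hk1|Hk1].
      + exists 1. split; [lra|]. intros z Hz [Hz1 Hz2]. rewrite Hk1 in Heq. simpl in Heq. rewrite Hx0 in Heq.
        unfold inI in Hz. replace z with y by lra. rewrite Rminus_diag, Rabs_R0; lra.
      + assert (Hpk : (1 <= pred k <= N)%nat) by lia.
        pose proof (part_smono N xs Hp (pred (pred k)) (pred k) ltac:(lia)).
        destruct (Hpw (pred k) Hpk y ltac:(unfold piece; lra) eps He) as [d [Hd Hc]].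
        exists (Rmin d (xs (pred k) - xs (pred (pred k)))). split. apply Rmin_pos; lra.
        intros z Hz [Hz1 Hz2]. pose proof (Rmin_l d (xs (pred k) - xs (pred (pred k)))).
        pose proof (Rmin_r d (xs (pred k) - xs (pred (pred k)))).
        apply Hc. unfold piece; lra. apply Rabs_lt_both; lra. }
  assert (HR : exists dR, 0 < dR /\ forall z, inI z -> y <= z < y + dR -> Rabs (F z - F y) < eps).
  { destruct (Rle_lt_or_eq_dec _ _ Hr) as [Hlt|Heq].
    - destruct (Hpw k Hk y (conj Hl Hr) eps He) as [d [Hd Hc]].
      exists (Rmin d (xs k - y)). split. apply Rmin_pos; lra.
      intros z Hz [Hz1 Hz2]. pose proof (Rmin_l d (xs k - y)). pose proof (Rmin_r d (xs k - y)).
      apply Hc. unfold piece. pose proof (part_mono N xs Hp (pred k) k ltac:(lia)); lra. apply Rabs_lt_both; lra.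
    - destruct (Nat.eq_dec k N) as [HkN|HkN].
      + exists 1. split; [lra|]. intros z Hz [Hz1 Hz2]. rewrite HkN, HxN in Heq.
        unfold inI in Hz. replace z with y by lra. rewrite Rminus_diag, Rabs_R0; lra.
      + assert (Hpk : (1 <= S k <= N)%nat) by lia.
        pose proof (part_smono N xs Hp k (S k) ltac:(lia)).
        destruct (Hpw (S k) Hpk y ltac:(unfold piece; simpl; lra) eps He) as [d [Hd Hc]].
        exists (Rmin d (xs (S k) - xs k)). split. apply Rmin_pos; lra.
        intros z Hz [Hz1 Hz2]. pose proof (Rmin_l d (xs (S k) - xs k)).
        pose proof (Rmin_r d (xs (S k) - xs k)).
        apply Hc. unfold piece; simpl; lra. apply Rabs_lt_both; lra. }
  destruct HL as [dL [HdL HL]]. destruct HR as [dR [HdR HR]].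
  exists (Rmin dL dR). split. apply Rmin_pos; lra.
  intros z Hz Hzy. pose proof (Rmin_l dL dR). pose proof (Rmin_r dL dR).
  apply Rabs_lt_both in Hzy.
  destruct (Rle_dec z y). apply HL; auto; lra. apply HR; auto; lra.
Qed.

Definition Top N xs (alpha : nat -> R) (D e : R -> R) (y : R) :=
  alpha (idx N xs y) * (e (Linv N xs (idx N xs y) y) + D (Linv N xs (idx N xs y) y)).

Lemma T_eq N xs alpha D e : partition N xs ->
  e (xs 0%nat) + D (xs 0%nat) = 0 -> e (xs N) + D (xs N) = 0 ->
  forall i, (1 <= i <= N)%nat -> forall y, piece xs i y ->
  Top N xs alpha D e y = alpha i * (e (Linv N xs i y) + D (Linv N xs i y)).
Proof.
  intros Hp E0 EN i Hi y Hy.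
  destruct (idx_spec N xs y Hp (piece_inI N xs i y Hp Hi Hy)) as [Hk [[Hl Hr] Hmin]].
  unfold Top. set (k := idx N xs y) in *.
  assert (Hki : (k <= i)%nat).
  { destruct (Nat.le_gt_cases k i) as [?|Hlt]; auto. exfalso. specialize (Hmin i ltac:(lia)). unfold piece in Hy. lra. }
  destruct (Nat.eq_dec k i) as [->|Hne]; auto.
  pose proof (part_mono N xs Hp k (pred i) ltac:(lia)). unfold piece in Hy.
  assert (Hyk : y = xs k) by lra. assert (Hyi : y = xs (pred i)) by lra.
  rewrite Hyk at 1 2. rewrite Linv_right by (auto; lia). rewrite EN.
  rewrite Hyi. rewrite Linv_left by auto. rewrite E0. ring.
Qed.

Fixpoint it N xs alpha D (k : nat) : R -> R :=
  match k with
  | O => fun _ => 0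
  | S k => Top N xs alpha D (it N xs alpha D k)
  end.

Lemma it_ends N xs alpha D : partition N xs -> D (xs 0%nat) = 0 -> D (xs N) = 0 ->
  forall k, it N xs alpha D k (xs 0%nat) = 0 /\ it N xs alpha D k (xs N) = 0.
Proof.
  intros Hp H0 HN. pose proof Hp as [HN2 _]. induction k as [|k [IH0 IHN]]; simpl; [split; auto|].
  split.
  - rewrite (T_eq N xs alpha D (it N xs alpha D k) Hp ltac:(lra) ltac:(lra) 1 ltac:(lia) (xs 0%nat)).
    2:{ unfold piece; simpl. pose proof (part_mono N xs Hp 0 1 ltac:(lia)). lra. }
    pose proof (Linv_left N xs 1 Hp ltac:(lia)) as HL; simpl in HL; rewrite HL.
    rewrite IH0, H0; ring.
  - rewrite (T_eq N xs alpha D (it N xs alpha D k) Hp ltac:(lra) ltac:(lra) N ltac:(lia) (xs N)).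
    2:{ unfold piece; simpl. pose proof (part_mono N xs Hp (pred N) N ltac:(lia)). lra. }
    rewrite Linv_right by (auto; lia). rewrite IHN, HN; ring.
Qed.

Lemma idx_good N xs y : partition N xs -> inI y ->
  (1 <= idx N xs y <= N)%nat /\ inI (Linv N xs (idx N xs y) y).
Proof.
  intros Hp Hy. destruct (idx_spec N xs y Hp Hy) as [Hk [Hpc _]]. split; auto.
  apply Linv_in; auto.
Qed.

Lemma it_diff N xs alpha D a eta : partition N xs -> 0 <= a ->
  (forall i, (1 <= i <= N)%nat -> Rabs (alpha i) <= a) ->
  (forall y, inI y -> Rabs (D y) <= eta) ->
  forall k y, inI y -> Rabs (it N xs alpha D (S k) y - it N xs alpha D k y) <= a ^ k * (a * eta).
Proof.
  intros Hp Ha Hal HD. induction k as [|k IH]; intros y Hy.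
  - simpl; unfold Top. destruct (idx_good N xs y Hp Hy) as [Hk HL].
    rewrite Rminus_0_r, Rplus_0_l, Rmult_1_l, Rabs_mult.
    apply Rmult_le_compat; auto using Rabs_pos.
  - change (Rabs (Top N xs alpha D (it N xs alpha D (S k)) y - Top N xs alpha D (it N xs alpha D k) y) <= a ^ S k * (a * eta)).
    unfold Top. destruct (idx_good N xs y Hp Hy) as [Hk HL].
    set (z := Linv N xs (idx N xs y) y) in *.
    replace (alpha (idx N xs y) * (it N xs alpha D (S k) z + D z) -
       alpha (idx N xs y) * (it N xs alpha D k z + D z)) with
      (alpha (idx N xs y) * (it N xs alpha D (S k) z - it N xs alpha D k z)) by ring.
    rewrite Rabs_mult. replace (a ^ S k * (a * eta)) with (a * (a ^ k * (a * eta))) by (simpl; ring).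
    apply Rmult_le_compat; auto using Rabs_pos.
Qed.

Lemma it_cauchy N xs alpha D a eta : partition N xs -> 0 <= a < 1 ->
  (forall i, (1 <= i <= N)%nat -> Rabs (alpha i) <= a) ->
  (forall y, inI y -> Rabs (D y) <= eta) ->
  forall k m y, inI y -> Rabs (it N xs alpha D (k + m) y - it N xs alpha D k y) <= (a * eta) * a ^ k / (1 - a).
Proof.
  intros Hp Ha Hal HD k m y Hy.
  assert (Heta : 0 <= eta) by (pose proof (HD y Hy); pose proof (Rabs_pos (D y)); lra).
  assert (H : Rabs (it N xs alpha D (k + m) y - it N xs alpha D k y) <= (a * eta) * (a ^ k - a ^ (k + m)) / (1 - a)).
  { induction m as [|m IH].
    - rewrite Nat.add_0_r, Rminus_diag, Rabs_R0. unfold Rdiv. rewrite Rminus_diag. lra.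
    - replace (it N xs alpha D (k + S m) y - it N xs alpha D k y) with
        ((it N xs alpha D (S (k + m)) y - it N xs alpha D (k + m) y) + (it N xs alpha D (k + m) y - it N xs alpha D k y))
        by (rewrite Nat.add_succ_r; ring).
      eapply Rle_trans. apply Rabs_triang.
      pose proof (it_diff N xs alpha D a eta Hp (proj1 Ha) Hal HD (k + m) y Hy).
      replace ((a * eta) * (a ^ k - a ^ (k + S m)) / (1 - a)) with
        (a ^ (k + m) * (a * eta) + (a * eta) * (a ^ k - a ^ (k + m)) / (1 - a))
        by (rewrite Nat.add_succ_r; simpl; field; lra).
      lra. }
  eapply Rle_trans; [exact H|]. apply Rmult_le_compat_r. apply Rlt_le, Rinv_0_lt_compat; lra.
  apply Rmult_le_compat_l. apply Rmult_le_pos; lra. pose proof (pow_le a (k + m) (proj1 Ha)). lra.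
Qed.

Lemma lim_bound (u : nat -> R) l v B K : Un_cv u l -> (forall k, (K <= k)%nat -> Rabs (u k - v) <= B) ->
  Rabs (l - v) <= B.
Proof.
  intros Hu Hb. destruct (Rle_lt_dec (Rabs (l - v)) B) as [?|Hlt]; auto. exfalso.
  destruct (Hu (Rabs (l - v) - B)) as [K2 HK2]; [lra|].
  specialize (HK2 (max K K2) ltac:(lia)). specialize (Hb (max K K2) ltac:(lia)).
  unfold R_dist in HK2. pose proof (Rabs_triang (u (max K K2) - v) (l - u (max K K2))).
  replace (u (max K K2) - v + (l - u (max K K2))) with (l - v) in H by ring.
  rewrite Rabs_minus_sym in HK2. lra.
Qed.

Lemma small_pow a : 0 <= a < 1 -> forall e, 0 < e -> exists k, a ^ k < e.
Proof.
  intros Ha e He. destruct (pow_lt_1_zero a ltac:(rewrite Rabs_pos_eq; lra) e He) as [k Hk].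
  exists k. specialize (Hk k (le_n k)). rewrite Rabs_pos_eq in Hk by (apply pow_le; lra). auto.
Qed.

Lemma zero_of_pow x K0 a : 0 <= a < 1 -> 0 <= K0 -> (forall k, Rabs x <= K0 * a ^ k) -> x = 0.
Proof.
  intros Ha HK H. destruct (Req_dec x 0) as [?|Hx]; auto. exfalso.
  pose proof (Rabs_pos_lt x Hx).
  destruct (small_pow a Ha (Rabs x / (K0 + 1))) as [k Hk]. apply Rdiv_lt_0_compat; lra.
  specialize (H k). assert (0 <= a ^ k) by (apply pow_le; lra).
  assert (K0 * a ^ k <= (K0 + 1) * a ^ k) by nra.
  assert ((K0 + 1) * a ^ k < Rabs x).
  { apply (Rmult_lt_compat_l (K0 + 1)) in Hk; [|lra]. replace ((K0 + 1) * (Rabs x / (K0 + 1))) with (Rabs x) in Hk by (field; lra). lra. }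
  lra.
Qed.

Lemma fractal_exists N xs alpha D a eta : partition N xs -> 0 <= a < 1 ->
  (forall i, (1 <= i <= N)%nat -> Rabs (alpha i) <= a) ->
  contI D -> D (xs 0%nat) = 0 -> D (xs N) = 0 ->
  (forall y, inI y -> Rabs (D y) <= eta) ->
  exists E, contI E /\ (forall y, inI y -> Rabs (E y) <= a * eta / (1 - a)) /\
    forall i, (1 <= i <= N)%nat -> forall y, piece xs i y ->
      E y = alpha i * (E (Linv N xs i y) + D (Linv N xs i y)).
Proof.
  intros Hp Ha Hal HDc HD0 HDN HD.
  set (u := it N xs alpha D).
  assert (Heta : 0 <= eta) by (pose proof (HD 0 ltac:(unfold inI; pose proof PI_RGT_0; lra)); pose proof (Rabs_pos (D 0)); lra).
  set (c := a * eta). assert (Hc : 0 <= c) by (unfold c; apply Rmult_le_pos; lra).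
  assert (Hcau : forall k m y, inI y -> Rabs (u (k + m)%nat y - u k y) <= c * a ^ k / (1 - a))
    by (intros; apply it_cauchy; auto).
  assert (Hcr : forall y, Cauchy_crit (fun k => u k (clamp y))).
  { intros y e He. destruct (small_pow a Ha (e * (1 - a) / (2 * c + 1))) as [K HK].
    { apply Rdiv_lt_0_compat; [apply Rmult_lt_0_compat|]; lra. }
    exists K. intros n m Hn Hm. unfold R_dist.
    pose proof (Hcau K (n - K)%nat (clamp y) (clamp_in y)). pose proof (Hcau K (m - K)%nat (clamp y) (clamp_in y)).
    replace (K + (n - K))%nat with n in * by lia. replace (K + (m - K))%nat with m in * by lia.
    assert (Hb : c * a ^ K / (1 - a) < e / 2).
    { apply (Rmult_lt_reg_r (1 - a)); [lra|]. unfold Rdiv. rewrite Rmult_assoc, Rinv_l, Rmult_1_r by lra.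
      apply Rle_lt_trans with (c * (e * (1 - a) / (2 * c + 1))). apply Rmult_le_compat_l; lra.
      apply (Rmult_lt_reg_r (2 * c + 1)); [lra|]. replace (c * (e * (1 - a) / (2 * c + 1)) * (2 * c + 1)) with (c * (e * (1 - a))) by (field; lra).
      assert (0 < e * (1 - a)) by (apply Rmult_lt_0_compat; lra). nra. }
    pose proof (Rabs_triang (u n (clamp y) - u K (clamp y)) (u K (clamp y) - u m (clamp y))).
    replace (u n (clamp y) - u K (clamp y) + (u K (clamp y) - u m (clamp y))) with (u n (clamp y) - u m (clamp y)) in H1 by ring.
    rewrite Rabs_minus_sym in H0. lra. }
  set (E := fun y => proj1_sig (R_complete _ (Hcr y))).
  assert (HE : forall y, Un_cv (fun k => u k (clamp y)) (E y)) by (intros y; exact (proj2_sig (R_complete _ (Hcr y)))).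
  assert (HuE : forall k y, inI y -> Rabs (u k y - E y) <= c * a ^ k / (1 - a)).
  { intros k y Hy. rewrite Rabs_minus_sym. apply (lim_bound _ _ _ _ k (HE y)).
    intros m Hm. rewrite clamp_id by auto. replace m with (k + (m - k))%nat by lia. auto. }
  assert (Hends : forall k, u k (xs 0%nat) = 0 /\ u k (xs N) = 0) by (apply it_ends; auto).
  assert (Hcont : forall k, contI (u k)).
  { induction k as [|k IH].
    - intros y _ e He. exists 1. split; [lra|]. intros; simpl. rewrite Rminus_diag, Rabs_R0; lra.
    - apply (PW N xs); auto. intros i Hi y Hy e He.
      assert (HLy := Linv_in N xs i y Hp Hi Hy).
      destruct (Hends k) as [Hk0 HkN].
      assert (Hsum : contI (fun z => u k z + D z)).
      { intros w Hw e' He'. destruct (IH w Hw (e'/2) ltac:(lra)) as [d1 [Hd1 H1]].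
        destruct (HDc w Hw (e'/2) ltac:(lra)) as [d2 [Hd2 H2]].
        exists (Rmin d1 d2). split. apply Rmin_pos; lra. intros z Hz Hzw.
        pose proof (Rmin_l d1 d2). pose proof (Rmin_r d1 d2).
        specialize (H1 z Hz ltac:(lra)). specialize (H2 z Hz ltac:(lra)).
        replace (u k z + D z - (u k w + D w)) with ((u k z - u k w) + (D z - D w)) by ring.
        pose proof (Rabs_triang (u k z - u k w) (D z - D w)). lra. }
      destruct (Hsum _ HLy (e / (Rabs (alpha i) + 1))) as [d [Hd Hdd]].
      { apply Rdiv_lt_0_compat; [lra|]. pose proof (Rabs_pos (alpha i)); lra. }
      pose proof (part_smono N xs Hp (pred i) i ltac:(lia)).
      set (s := (xs N - xs 0%nat) / (xs i - xs (pred i))).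
      assert (Hs : 0 < s). { unfold s. apply Rdiv_lt_0_compat; [|lra]. pose proof (part_smono N xs Hp 0 N ltac:(lia)). lra. }
      exists (d / s). split. apply Rdiv_lt_0_compat; lra.
      intros z Hz Hzy. simpl. fold u.
      change (Rabs (Top N xs alpha D (u k) z - Top N xs alpha D (u k) y) < e). rewrite (T_eq N xs alpha D (u k) Hp ltac:(lra) ltac:(lra) i Hi z Hz).
      rewrite (T_eq N xs alpha D (u k) Hp ltac:(lra) ltac:(lra) i Hi y Hy).
      rewrite <- Rmult_minus_distr_l, Rabs_mult.
      assert (HLz := Linv_in N xs i z Hp Hi Hz).
      assert (Hdist : Rabs (Linv N xs i z - Linv N xs i y) < d).
      { replace (Linv N xs i z - Linv N xs i y) with (s * (z - y)) by (unfold Linv, s; field; lra).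
        rewrite Rabs_mult, Rabs_pos_eq by lra.
        apply (Rmult_lt_compat_l s) in Hzy; auto. replace (s * (d / s)) with d in Hzy by (field; lra). lra. }
      specialize (Hdd _ HLz Hdist).
      pose proof (Rabs_pos (alpha i)).
      apply Rle_lt_trans with ((Rabs (alpha i) + 1) * Rabs (u k (Linv N xs i z) + D (Linv N xs i z) - (u k (Linv N xs i y) + D (Linv N xs i y)))).
      { apply Rmult_le_compat_r. apply Rabs_pos. lra. }
      apply (Rmult_lt_compat_l (Rabs (alpha i) + 1)) in Hdd; [|lra].
      replace ((Rabs (alpha i) + 1) * (e / (Rabs (alpha i) + 1))) with e in Hdd by (field; lra). lra. }
  exists E. split; [|split].
  - intros y Hy e He.
    destruct (small_pow a Ha (e * (1 - a) / (3 * (c + 1)))) as [k Hk].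
    { apply Rdiv_lt_0_compat; [apply Rmult_lt_0_compat|]; lra. }
    assert (Hb : c * a ^ k / (1 - a) < e / 3).
    { apply (Rmult_lt_reg_r (1 - a)); [lra|]. unfold Rdiv. rewrite Rmult_assoc, Rinv_l, Rmult_1_r by lra.
      assert (0 <= a ^ k) by (apply pow_le; lra).
      apply Rle_lt_trans with ((c + 1) * a ^ k). nra.
      apply (Rmult_lt_compat_l (c + 1)) in Hk; [|lra].
      replace ((c + 1) * (e * (1 - a) / (3 * (c + 1)))) with (e * / 3 * (1 - a)) in Hk by (field; lra). lra. }
    destruct (Hcont k y Hy (e/3) ltac:(lra)) as [d [Hd Hdd]].
    exists d. split; auto. intros z Hz Hzy.
    specialize (Hdd z Hz Hzy). pose proof (HuE k z Hz). pose proof (HuE k y Hy).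
    replace (E z - E y) with (-(u k z - E z) + (u k z - u k y) + (u k y - E y)) by ring.
    pose proof (Rabs_triang (-(u k z - E z) + (u k z - u k y)) (u k y - E y)).
    pose proof (Rabs_triang (-(u k z - E z)) (u k z - u k y)). rewrite Rabs_Ropp in H2. lra.
  - intros y Hy. specialize (HuE 0%nat y Hy). simpl in HuE. rewrite Rminus_0_l, Rabs_Ropp, Rmult_1_r in HuE. auto.
  - intros i Hi y Hy. apply Rminus_diag_uniq.
    assert (HLy := Linv_in N xs i y Hp Hi Hy).
    apply (zero_of_pow _ (2 * c / (1 - a)) a Ha). apply Rmult_le_pos; [lra|apply Rlt_le, Rinv_0_lt_compat; lra].
    intros k. destruct (Hends k) as [Hk0 HkN].
    assert (Heq : u (S k) y = alpha i * (u k (Linv N xs i y) + D (Linv N xs i y))).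
    { simpl. apply T_eq; auto; lra. }
    replace (E y - alpha i * (E (Linv N xs i y) + D (Linv N xs i y))) with
      (-(u (S k) y - E y) + alpha i * (u k (Linv N xs i y) - E (Linv N xs i y))) by (rewrite Heq; ring).
    pose proof (Rabs_triang (-(u (S k) y - E y)) (alpha i * (u k (Linv N xs i y) - E (Linv N xs i y)))).
    rewrite Rabs_Ropp, Rabs_mult in H.
    pose proof (HuE (S k) y (piece_inI N xs i y Hp Hi Hy)). pose proof (HuE k _ HLy).
    assert (Rabs (alpha i) * Rabs (u k (Linv N xs i y) - E (Linv N xs i y)) <= 1 * (c * a ^ k / (1 - a))).
    { apply Rmult_le_compat; auto using Rabs_pos. specialize (Hal i Hi); lra. }
    assert (c * a ^ S k / (1 - a) <= c * a ^ k / (1 - a)).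
    { unfold Rdiv. apply Rmult_le_compat_r. apply Rlt_le, Rinv_0_lt_compat; lra.
      apply Rmult_le_compat_l; auto. simpl. assert (0 <= a ^ k) by (apply pow_le; lra). nra. }
    replace (2 * c / (1 - a) * a ^ k) with (c * a ^ k / (1 - a) + c * a ^ k / (1 - a)) by (field; lra).
    lra.
Qed.

Lemma trsum_TP (a b : nat -> R) m : TP (fun x => sum_f_R0
        (fun j => a (S j) * cos (INR (S j) * x) + b (S j) * sin (INR (S j) * x)) m).
Proof.
  induction m as [|m IH].
  - apply (TP_ext _ _ (TP_add _ _ (TP_cos (a 1%nat) 1) (TP_sin (b 1%nat) 1))); intros; simpl; auto.
  - apply (TP_ext _ _ (TP_add _ _ IH (TP_add _ _ (TP_cos (a (S (S m))) (S (S m))) (TP_sin (b (S (S m))) (S (S m)))))).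
    intros; simpl; auto.
Qed.

Lemma trig_TP m p : trig_poly m p -> TP p.
Proof.
  intros [a [b H]]. destruct m as [|m].
  - apply (TP_ext _ _ (TP_const (a 0%nat))). intros; rewrite H; ring.
  - apply (TP_ext _ _ (TP_add _ _ (TP_const (a 0%nat)) (trsum_TP a b m))). intros; rewrite H; auto.
Qed.

Lemma contpt_contI f : (forall x, inI x -> continuity_pt f x) -> contI f.
Proof.
  intros Hf x Hx eps Heps. specialize (Hf x Hx eps Heps) as [d [Hd H]].
  exists d; split; [lra|]. intros y _ Hy.
  destruct (Req_dec y x) as [->|Hne]. { rewrite Rminus_diag, Rabs_R0; lra. }
  apply (H y). split; [split; [exact I|auto]|exact Hy].
Qed.

Lemma trig_rational_cont r : trig_rational r -> contI r.
Proof.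
  intros [m [n [p [q [Hp [Hq [Hpos Hr]]]]]]].
  apply (contI_ext (fun x => p x / q x)); [|intros; symmetry; auto].
  apply contpt_contI. intros x Hx. apply (continuity_pt_div p q x).
  apply (TP_cont _ (trig_TP _ _ Hp)). apply (TP_cont _ (trig_TP _ _ Hq)).
  specialize (Hpos x Hx). lra.
Qed.

Lemma cont_sum (F : nat -> R -> R) m : (forall k, continuity (F k)) ->
  continuity (fun x => sum_f_R0 (fun k => F k x) m).
Proof.
  intros H. induction m as [|m IH]; simpl. apply H. apply continuity_plus; auto.
Qed.

Lemma cont_pow g k : continuity g -> continuity (fun x => g x ^ k).
Proof. intros. apply (continuity_comp g (fun y => y ^ k)); auto. apply derivable_continuous, derivable_pow. Qed.

Lemma bern_cont n g : continuity (bernstein n g).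
Proof.
  unfold bernstein. apply cont_sum. intros k.
  apply continuity_mult; [apply continuity_mult; [apply continuity_mult|]|].
  - apply continuity_const; intros ? ?; auto.
  - apply cont_pow. apply continuity_minus. apply derivable_continuous, derivable_id. apply continuity_const; intros ? ?; auto.
  - apply cont_pow. apply continuity_minus. apply continuity_const; intros ? ?; auto. apply derivable_continuous, derivable_id.
  - apply continuity_const; intros ? ?; auto.
Qed.

Lemma contI_minus f g : contI f -> contI g -> contI (fun x => f x - g x).
Proof.
  intros Hf Hg w Hw e' He'. destruct (Hf w Hw (e'/2) ltac:(lra)) as [d1 [Hd1 H1]].
  destruct (Hg w Hw (e'/2) ltac:(lra)) as [d2 [Hd2 H2]].
  exists (Rmin d1 d2). split. apply Rmin_pos; lra. intros z Hz Hzw.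
  pose proof (Rmin_l d1 d2). pose proof (Rmin_r d1 d2).
  specialize (H1 z Hz ltac:(lra)). specialize (H2 z Hz ltac:(lra)).
  replace (f z - g z - (f w - g w)) with ((f z - f w) + - (g z - g w)) by ring.
  pose proof (Rabs_triang (f z - f w) (- (g z - g w))) as Ht. rewrite Rabs_Ropp in Ht. lra.
Qed.

Lemma contI_plus f g : contI f -> contI g -> contI (fun x => f x + g x).
Proof.
  intros Hf Hg. apply (contI_ext (fun x => f x - (fun y => - g y) x)); [|intros; ring].
  apply contI_minus; auto. intros w Hw e He. destruct (Hg w Hw e He) as [d [Hd H]].
  exists d; split; auto. intros z Hz Hzw. specialize (H z Hz Hzw).
  replace (- g z - - g w) with (- (g z - g w)) by ring. rewrite Rabs_Ropp; auto.
Qed.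

Lemma bern_left n g : (n > 0)%nat -> bernstein n g (- PI) = g (- PI).
Proof.
  intros Hn. pose proof PI_RGT_0. rewrite bern_eq by auto.
  replace ((- PI - - PI) / (PI - - PI)) with 0 by (field; lra).
  assert (Hz : forall i, bb n (S i) 0 = 0) by (intros; unfold bb; simpl; ring).
  pose proof (M0 n 0) as H1. rewrite decomp_sum in H1 |- * by lia.
  rewrite sum_eq_R0 in H1 by (intros; apply Hz). rewrite sum_eq_R0 by (intros; rewrite Hz; ring).
  unfold node. replace (- PI + INR 0 / INR n * (PI - - PI)) with (- PI) by (simpl; field; apply not_0_INR; lia).
  rewrite Rplus_0_r in *. rewrite H1; ring.
Qed.

Lemma bern_right n g : (n > 0)%nat -> bernstein n g PI = g PI.
Proof.
  intros Hn. pose proof PI_RGT_0. rewrite bern_eq by auto.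
  replace ((PI - - PI) / (PI - - PI)) with 1 by (field; lra).
  destruct n as [|n]; [lia|].
  assert (Hz : forall i, (i <= n)%nat -> bb (S n) i 1 = 0).
  { intros i Hi. unfold bb. replace (S n - i)%nat with (S (n - i)) by lia. simpl. ring. }
  pose proof (M0 (S n) 1) as H1. rewrite tech5 in H1 |- *.
  rewrite sum_eq_R0 in H1 by (intros; apply Hz; auto). rewrite sum_eq_R0 by (intros; rewrite Hz; auto; ring).
  unfold node. replace (- PI + INR (S n) / INR (S n) * (PI - - PI)) with PI by (field; apply not_0_INR; lia).
  rewrite Rplus_0_l in *. rewrite H1; ring.
Qed.

Theorem mainTheorem3 :
  forall (N : nat) (xs alpha : nat -> R),
    partition N xs -> scale_vector N alpha ->
    forall f : R -> R, C2pi f ->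
    forall eps : R, 0 < eps ->
      exists (n : nat) (h : R -> R),
        (1 <= n)%nat /\ in_fractal_rational N xs alpha n h /\
        forall x, inI x -> Rabs (h x - f x) < eps.
Proof.
  intros N xs alpha Hp Hs f Hf eps He.
  destruct (alpha_bound N alpha Hs) as [a [Ha Hal]].
  destruct (trig_approx f Hf (eps/2) ltac:(lra)) as [r [Htr Hr]].
  assert (Hrc := trig_rational_cont r Htr).
  set (eta := eps * (1 - a) / 4).
  assert (Heta : 0 < eta) by (unfold eta; apply Rdiv_lt_0_compat; [apply Rmult_lt_0_compat|]; lra).
  destruct (bern_conv r Hrc eta Heta) as [n [Hn1 Hb]].
  set (D := fun y => r y - bernstein n r y).
  assert (HDc : contI D). { apply contI_minus; auto. apply cont_contI, bern_cont. }
  pose proof Hp as [HN2 [Hx0 [HxN _]]].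
  assert (HD0 : D (xs 0%nat) = 0) by (unfold D; rewrite Hx0, bern_left by lia; ring).
  assert (HDN : D (xs N) = 0) by (unfold D; rewrite HxN, bern_right by lia; ring).
  assert (HDb : forall y, inI y -> Rabs (D y) <= eta).
  { intros y Hy. unfold D. rewrite Rabs_minus_sym. apply Rlt_le; auto. }
  destruct (fractal_exists N xs alpha D a eta Hp Ha Hal HDc HD0 HDN HDb) as [E [HEc [HEb HEq]]].
  exists n, (fun y => r y + E y). split; [auto|split].
  - exists r. split; auto. split.
    + apply contI_plus; auto.
    + intros i Hi y Hy. rewrite (HEq i Hi y Hy). unfold D. ring.
  - intros x Hx. specialize (Hr x Hx). specialize (HEb x Hx).
    assert (a * eta / (1 - a) <= eps / 4).
    { unfold eta. replace (a * (eps * (1 - a) / 4) / (1 - a)) with (a * (eps / 4)) by (field; lra).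
      rewrite <- (Rmult_1_l (eps/4)) at 2. apply Rmult_le_compat_r; lra. }
    replace (r x + E x - f x) with ((r x - f x) + E x) by ring.
    pose proof (Rabs_triang (r x - f x) (E x)). lra.
Qed.
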